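(* Let $k\ge 1$ and let $\lambda=(\lambda_1,\ldots,\lambda_k)$ be a partition with at most $k$ nonzero parts (trailing zeros allowed). Define $\mu=(\mu_1,\ldots,\mu_k)$ by $\mu_1=\lambda_1$ and $\mu_i=\min\{\mu_{i-1},\lambda_i+(i-1)\}$ for $1<i\le k$. Then $\mu$ is the unique partition that is maximal for $\lambda$.
   Context: A partition is a weakly decreasing sequence of nonnegative integers; $\mathcal P_k$ denotes the set of partitions of length at most $k$ (length = number of nonzero parts), written as sequences of length $k$. Partitions are identified with their Young diagrams (English convention, $(i,j)$ is the $j$th box of row $i$); $|\lambda|=\sum_i\lambda_i$. For $\lambda,\mu\in\mathcal P_k$ with $\lambda\subseteq\mu$, ${\sf Tab}(\mu/\lambda)$ is the set of fillings of the boxes of the skew shape $\mu/\lambda$ with entries in $\{1,\ldots,k\}$ such that entries strictly increase left to right in each row, strictly increase top to bottom in each column, and every entry in row $i$ is at most $i-1$ (for each $i\in\{1,\ldots,k\}$). A partition $\mu\in\mathcal P_k$ with $\lambda\subseteq\mu$ is called maximal for $\lambda$ if ${\sf Tab}(\mu/\lambda)\neq\emptyset$ and ${\sf Tab}(\nu/\lambda)=\emptyset$ for every $\nu\in\mathcal P_k$ with $\lambda\subseteq\nu$ and $|\nu|>|\mu|$. *)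

(* Defs.v *)
From mathcomp Require Import all_boot.
Set Implicit Arguments. Unset Strict Implicit. Unset Printing Implicit Defensive.

(* Conventions: a partition in P_k is a seq nat of size k, weakly decreasing.
   Rows and columns are 0-indexed: paper row i (1-based) is row i-1 here,
   paper box (i,j) is box (i-1, j-1) here. *)

Definition is_part (k : nat) (s : seq nat) : Prop :=
  size s = k /\ sorted geq s.

Definition part_sub (k : nat) (lam mu : seq nat) : Prop :=
  forall i, i < k -> nth 0 lam i <= nth 0 mu i.

Definition in_skew (k : nat) (lam mu : seq nat) (i j : nat) : Prop :=
  i < k /\ nth 0 lam i <= j /\ j < nth 0 mu i.

Definition is_tab (k : nat) (lam mu : seq nat) (T : nat -> nat -> nat) : Prop :=
  (forall i j, in_skew k lam mu i j -> 1 <= T i j <= k) /\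
  (* entries in (1-based) row i+1 are at most i *)
  (forall i j, in_skew k lam mu i j -> T i j <= i) /\
  (forall i j j', in_skew k lam mu i j -> in_skew k lam mu i j' -> j < j' ->
     T i j < T i j') /\
  (forall i i' j, in_skew k lam mu i j -> in_skew k lam mu i' j -> i < i' ->
     T i j < T i' j).

Definition tab_nonempty (k : nat) (lam mu : seq nat) : Prop :=
  exists T : nat -> nat -> nat, is_tab k lam mu T.

Definition maximal_for (k : nat) (lam mu : seq nat) : Prop :=
  is_part k mu /\ part_sub k lam mu /\ tab_nonempty k lam mu /\
  forall nu, is_part k nu -> part_sub k lam nu -> sumn mu < sumn nu ->
    ~ tab_nonempty k lam nu.

(* mu_0 = lam_0, mu_i = min(mu_{i-1}, lam_i + i)  (0-indexed; paper: lam_i + (i-1)) *)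
Fixpoint mu_rec (lam : seq nat) (i : nat) : nat :=
  match i with
  | 0 => nth 0 lam 0
  | i'.+1 => minn (mu_rec lam i') (nth 0 lam i'.+1 + i'.+1)
  end.

Definition mu_of (k : nat) (lam : seq nat) : seq nat := mkseq (mu_rec lam) k.

(* Main.v *)
Require Import Defs.
From mathcomp Require Import all_boot.
From mathcomp Require Import zify.

Lemma sorted_nthS (s : seq nat) i : sorted geq s -> nth 0 s i.+1 <= nth 0 s i.
Proof.
move=> /(sortedP 0) H; case: (ltnP i.+1 (size s)) => Hi; first exact: H.
by rewrite nth_default.
Qed.

Lemma mu_rec_S lam i : mu_rec lam i.+1 <= mu_rec lam i.
Proof. by rewrite /= geq_minl. Qed.

Lemma mu_rec_mono lam i i' : i <= i' -> mu_rec lam i' <= mu_rec lam i.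
Proof.
elim: i' => [|i' IH]; first by rewrite leqn0 => /eqP ->.
rewrite leq_eqVlt => /orP [/eqP -> //|Hlt].
exact: leq_trans (mu_rec_S lam i') (IH Hlt).
Qed.

Lemma mu_rec_ub lam i : mu_rec lam i <= nth 0 lam i + i.
Proof. case: i => [|i] /=; [by rewrite addn0 | by rewrite geq_minr]. Qed.

Lemma lam_le_mu lam i : sorted geq lam -> nth 0 lam i <= mu_rec lam i.
Proof.
move=> Hs; elim: i => [//|i IH] /=.
have := @sorted_nthS _ i Hs; rewrite leq_min; lia.
Qed.

Lemma row_bound k lam nu T i : is_tab k lam nu T -> i < k ->
  nth 0 nu i <= nth 0 lam i + i.
Proof.
move=> [H1 [H2 [H3 _]]] Hi.
case: (leqP (nth 0 nu i) (nth 0 lam i)) => Hl; first by apply: leq_trans Hl (leq_addr _ _).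
have key : forall t, nth 0 lam i + t < nth 0 nu i -> t < T i (nth 0 lam i + t).
  elim => [|t IH] Ht.
    have := H1 i (nth 0 lam i + 0); rewrite /in_skew; move=> /(_ (conj Hi (conj (leq_addr _ _) Ht))).
    by case/andP.
  have Hs1 : in_skew k lam nu i (nth 0 lam i + t) by split => //; split; [apply: leq_addr | lia].
  have Hs2 : in_skew k lam nu i (nth 0 lam i + t.+1) by split => //; split; [apply: leq_addr | lia].
  have := H3 _ _ _ Hs1 Hs2 ltac:(lia).
  have := IH ltac:(lia). lia.
have Hs : in_skew k lam nu i (nth 0 lam i + (nth 0 nu i - nth 0 lam i).-1).
  split => //; split; [apply: leq_addr | lia].
have := key (nth 0 nu i - nth 0 lam i).-1 ltac:(lia). have := H2 _ _ Hs. lia.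
Qed.

Lemma nu_le_mu k lam nu : is_part k nu -> tab_nonempty k lam nu ->
  forall i, i < k -> nth 0 nu i <= mu_rec lam i.
Proof.
move=> [_ Hs] [T HT]; elim => [|i IH] Hi.
  by have := row_bound _ _ _ _ _ HT Hi; rewrite addn0.
rewrite /= leq_min (row_bound _ _ _ _ _ HT Hi) andbT.
exact: leq_trans (@sorted_nthS _ i Hs) (IH (ltnW Hi)).
Qed.

Lemma sumn_le (s t : seq nat) : size s = size t ->
  (forall i, i < size s -> nth 0 s i <= nth 0 t i) ->
  sumn s <= sumn t /\ (sumn t <= sumn s -> s = t).
Proof.
elim: s t => [|a s IH] [|b t] //= [Hsz] H.
have Hab : a <= b := H 0 erefl.
have [Hle Heq] := IH t Hsz (fun i Hi => H i.+1 Hi).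
split; first by apply: leq_add.
move=> Hts.
have Eab : a = b by lia.
have Est : sumn t <= sumn s by lia.
by rewrite Eab (Heq Est).
Qed.

Lemma mu_is_part k lam : is_part k (mu_of k lam).
Proof.
split; first by rewrite size_mkseq.
apply/(sortedP 0) => i; rewrite size_mkseq => Hi.
rewrite !nth_mkseq //; last by apply: ltnW.
exact: mu_rec_S.
Qed.

Lemma mu_sub k lam : is_part k lam -> part_sub k lam (mu_of k lam).
Proof. move=> [_ Hs] i Hi; rewrite nth_mkseq //; exact: lam_le_mu. Qed.

Lemma mu_tab k lam : is_part k lam -> tab_nonempty k lam (mu_of k lam).
Proof.
move=> [_ Hs].
exists (fun i j => i.+1 + j - mu_rec lam i).
have E : forall i j, in_skew k lam (mu_of k lam) i j ->
  [/\ i < k, nth 0 lam i <= j, j < mu_rec lam i & mu_rec lam i <= nth 0 lam i + i].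
  move=> i j [Hi [H1 H2]]; rewrite nth_mkseq // in H2.
  by split => //; apply: mu_rec_ub.
split; [|split; [|split]].
- move=> i j /E [? ? ? ?]; lia.
- move=> i j /E [? ? ? ?]; lia.
- move=> i j j' /E [? ? ? ?] /E [? ? ? ?]; lia.
- move=> i i' j /E [? ? ? ?] /E [? ? ? ?] Hii.
  have := mu_rec_mono lam _ _ (ltnW Hii); lia.
Qed.

Theorem lemma3p4 (k : nat) (lam : seq nat) :
  1 <= k -> is_part k lam ->
  maximal_for k lam (mu_of k lam) /\
  (forall nu, maximal_for k lam nu -> nu = mu_of k lam).
Proof.
move=> Hk Hlam.
have Hp := mu_is_part k lam.
have Hsub := mu_sub _ _ Hlam.
have Ht := mu_tab _ _ Hlam.
have cmp : forall nu, is_part k nu -> tab_nonempty k lam nu ->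
   sumn nu <= sumn (mu_of k lam) /\ (sumn (mu_of k lam) <= sumn nu -> nu = mu_of k lam).
  move=> nu Hnu Htn; apply: sumn_le.
    by rewrite size_mkseq; case: Hnu.
  move=> i; case: (Hnu) => -> _ Hi; rewrite nth_mkseq //.
  exact: nu_le_mu _ _ _ Hnu Htn i Hi.
split.
  split => //; split => //; split => //.
  move=> nu Hnu _ Hlt Htn; have [Hle _] := cmp nu Hnu Htn; lia.
move=> nu [Hnu [_ [Htn Hmax]]].
have [_ Heq] := cmp nu Hnu Htn; apply: Heq.
case: (leqP (sumn (mu_of k lam)) (sumn nu)) => // Hlt.
by case: (Hmax _ Hp Hsub Hlt).
Qed.
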